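(* Let $\Gamma:[0,1]\to\mathcal{D}$ be a continuous path, $\Gamma_t=\Gamma(t)$. For every $s\in[0,1]$ and $\psi\in\Gamma_s$ there is an interval $I\subseteq[0,1]$, open in the topology of $[0,1]$ and containing $s$, which is the domain of a $\Gamma$-path through $\psi$ based at $s$. Moreover, if $j:I\to\mathrm{PSL}_2\mathbb{C}$ is any $\Gamma$-path through $\psi$ based at $s$, then $j$ is the unique $\Gamma$-path through $\psi$ based at $s$ with domain $I$.
   Context: $\mathcal{D}$ is the set of discrete torsion-free subgroups of $\mathrm{PSL}_2\mathbb{C}$ with the Chabauty topology: $\Gamma_n\to\Gamma$ iff every accumulation point of a sequence $\psi_n\in\Gamma_n$ lies in $\Gamma$ and every element of $\Gamma$ is a limit of some sequence $\psi_n\in\Gamma_n$. For a path $\Gamma:[0,1]\to\mathcal{D}$, $s\in[0,1]$ and $\psi\in\Gamma_s$, a $\Gamma$-path through $\psi$ based at $s$ is a continuous map $j:I\to\mathrm{PSL}_2\mathbb{C}$ such that $I\subseteq[0,1]$ is an interval containing $s$, $j(t)\in\Gamma_t$ for all $t\in I$, and $j(s)=\psi$. *)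

(* Defs.v *)
From Stdlib Require Import Reals.
From Coquelicot Require Import Coquelicot.
Open Scope R_scope.

Record M2 := mkM2 { ma : C; mb : C; mc : C; md : C }.

Definition mdet (A : M2) : C := (ma A * md A - mb A * mc A)%C.
Definition mmul (A B : M2) : M2 :=
  mkM2 (ma A * ma B + mb A * mc B)%C (ma A * mb B + mb A * md B)%C
       (mc A * ma B + md A * mc B)%C (mc A * mb B + md A * md B)%C.
Definition mid : M2 := mkM2 1%C 0%C 0%C 1%C.
Definition mneg (A : M2) : M2 := mkM2 (- ma A)%C (- mb A)%C (- mc A)%C (- md A)%C.
(* inverse of a determinant-one matrix (the adjugate) *)
Definition minv (A : M2) : M2 := mkM2 (md A) (- mb A)%C (- mc A)%C (ma A).
Fixpoint mpow (A : M2) (n : nat) : M2 :=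
  match n with O => mid | S k => mmul A (mpow A k) end.

Definition SL2 (A : M2) : Prop := mdet A = 1%C.

(** PSL_2(C) = SL_2(C)/{±I}: an element is represented by a matrix of SL_2(C),
    two representatives denote the same element iff they agree up to sign. *)
Definition peq (A B : M2) : Prop := A = B \/ A = mneg B.

Definition mdist (A B : M2) : R :=
  sqrt (Cmod (ma A - ma B)%C ^ 2 + Cmod (mb A - mb B)%C ^ 2
        + Cmod (mc A - mc B)%C ^ 2 + Cmod (md A - md B)%C ^ 2).
Definition pdist (A B : M2) : R := Rmin (mdist A B) (mdist A (mneg B)).

(** A subgroup of PSL_2(C), represented by its (full) preimage in SL_2(C),
    i.e. a subgroup of SL_2(C) containing -I. *)
Definition is_subgroup (G : M2 -> Prop) : Prop :=
  (forall A, G A -> SL2 A) /\ G mid /\ G (mneg mid) /\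
  (forall A B, G A -> G B -> G (mmul A B)) /\
  (forall A, G A -> G (minv A)).

Definition is_discrete (G : M2 -> Prop) : Prop :=
  forall A, G A -> exists eps, eps > 0 /\
    forall B, G B -> pdist A B < eps -> peq A B.

Definition is_torsion_free (G : M2 -> Prop) : Prop :=
  forall A n, G A -> (n >= 1)%nat -> peq (mpow A n) mid -> peq A mid.

Definition Dspace : Type :=
  { G : M2 -> Prop | is_subgroup G /\ is_discrete G /\ is_torsion_free G }.
Definition mem (G : Dspace) (A : M2) : Prop := proj1_sig G A.

Definition accum_point (psi : nat -> M2) (A : M2) : Prop :=
  SL2 A /\ forall eps N, eps > 0 -> exists n, (n >= N)%nat /\ pdist (psi n) A < eps.

Definition chabauty_cv (Gs : nat -> Dspace) (G : Dspace) : Prop :=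
  (forall psi : nat -> M2, (forall n, mem (Gs n) (psi n)) ->
     forall A, accum_point psi A -> mem G A) /\
  (forall A, mem G A -> exists psi : nat -> M2,
     (forall n, mem (Gs n) (psi n)) /\
     forall eps, eps > 0 -> exists N, forall n, (n >= N)%nat -> pdist (psi n) A < eps).

Definition in01 (t : R) : Prop := 0 <= t <= 1.

(** continuity of a path [0,1] -> D (the Chabauty topology on D is metrizable,
    so continuity is sequential continuity) *)
Definition chabauty_path (Gam : R -> Dspace) : Prop :=
  forall (t : R) (u : nat -> R), in01 t -> (forall n, in01 (u n)) ->
    Un_cv u t -> chabauty_cv (fun n => Gam (u n)) (Gam t).

Definition is_interval (I : R -> Prop) : Prop :=
  forall x y z, I x -> I z -> x <= y <= z -> I y.
Definition sub01 (I : R -> Prop) : Prop := forall t, I t -> in01 t.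
Definition open_in01 (I : R -> Prop) : Prop :=
  forall t, I t -> exists eps, eps > 0 /\
    forall u, in01 u -> Rabs (u - t) < eps -> I u.

Definition Gamma_path (Gam : R -> Dspace) (s : R) (psi : M2) (I : R -> Prop)
    (j : R -> M2) : Prop :=
  is_interval I /\ sub01 I /\ I s /\
  (forall t, I t -> forall eps, eps > 0 -> exists delta, delta > 0 /\
      forall u, I u -> Rabs (u - t) < delta -> pdist (j u) (j t) < eps) /\
  (forall t, I t -> mem (Gam t) (j t)) /\
  peq (j s) psi.

(* Main.v *)
Require Import Defs.
From Stdlib Require Import Reals.
From Coquelicot Require Import Coquelicot.
From Stdlib Require Import Lra Psatz ClassicalEpsilon List ZArith Classical.
Open Scope R_scope.
Definition n4 (p q r s : R) := sqrt (p^2+q^2+r^2+s^2).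

Lemma sqrt_le_of_sq x y : 0 <= y -> x <= y^2 -> sqrt x <= y.
Proof. intros Hy Hx. rewrite <- (sqrt_pow2 y Hy). apply sqrt_le_1_alt. exact Hx. Qed.

Lemma n4_nonneg p q r s : 0 <= n4 p q r s.
Proof. apply sqrt_pos. Qed.

Lemma n4_sq p q r s : (n4 p q r s)^2 = p^2+q^2+r^2+s^2.
Proof. unfold n4. rewrite pow2_sqrt; nra. Qed.

Lemma n4_mono p q r s p' q' r' s' : 0 <= p <= p' -> 0 <= q <= q' -> 0 <= r <= r' -> 0 <= s <= s' ->
  n4 p q r s <= n4 p' q' r' s'.
Proof. intros. unfold n4. apply sqrt_le_1_alt. nra. Qed.

Lemma n4_tri p q r s p' q' r' s' :
  n4 (p+p') (q+q') (r+r') (s+s') <= n4 p q r s + n4 p' q' r' s'.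
Proof.
  pose proof (n4_nonneg p q r s) as H1. pose proof (n4_nonneg p' q' r' s') as H2.
  pose proof (n4_sq p q r s) as E1. pose proof (n4_sq p' q' r' s') as E2.
  set (a := n4 p q r s) in *. set (b := n4 p' q' r' s') in *.
  unfold n4. apply sqrt_le_of_sq. lra.
  assert (HC : (p*p'+q*q'+r*r'+s*s')^2 <= (a*b)^2).
  { rewrite Rpow_mult_distr, E1, E2. 
    assert (0 <= (p*q'-q*p')^2 + (p*r'-r*p')^2 + (p*s'-s*p')^2 + (q*r'-r*q')^2 + (q*s'-s*q')^2 + (r*s'-s*r')^2) by (apply Rplus_le_le_0_compat; try apply pow2_ge_0; repeat apply Rplus_le_le_0_compat; apply pow2_ge_0).
    nra. }
  assert (p*p'+q*q'+r*r'+s*s' <= a*b).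
  { destruct (Rle_dec (p*p'+q*q'+r*r'+s*s') 0). nra.
    apply Rsqr_incr_0_var. unfold Rsqr. nra. nra. }
  nra.
Qed.

Lemma n4_le_sum p q r s : 0 <= p -> 0<= q -> 0 <= r -> 0 <= s -> n4 p q r s <= p+q+r+s.
Proof. intros. unfold n4. apply sqrt_le_of_sq; nra. Qed.
Lemma n4_ge1 p q r s : 0 <= p -> p <= n4 p q r s.
Proof. intros. unfold n4. rewrite <- (sqrt_pow2 p) at 1 by lra. apply sqrt_le_1_alt.
  assert (0 <= q^2) by apply pow2_ge_0. assert (0 <= r^2) by apply pow2_ge_0.
  assert (0 <= s^2) by apply pow2_ge_0. lra. Qed.

Lemma n4_perm p q r s : n4 p q r s = n4 s r q p.
Proof. unfold n4. f_equal. ring. Qed.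
Lemma n4_perm2 p q r s : n4 p q r s = n4 q p r s.
Proof. unfold n4. f_equal. ring. Qed.
Lemma n4_perm3 p q r s : n4 p q r s = n4 p r q s.
Proof. unfold n4. f_equal. ring. Qed.

(* Cauchy-Schwarz style multiplicativity *)
Lemma n4_mul a b c d e f g h x11 x12 x21 x22 :
  0 <= a -> 0 <= b -> 0 <= c -> 0 <= d -> 0 <= e -> 0 <= f -> 0 <= g -> 0 <= h ->
  0 <= x11 <= a*e + b*g -> 0 <= x12 <= a*f+b*h -> 0 <= x21 <= c*e+d*g -> 0 <= x22 <= c*f+d*h ->
  n4 x11 x12 x21 x22 <= n4 a b c d * n4 e f g h.
Proof.
  intros.
  unfold n4. rewrite <- sqrt_mult by (repeat apply Rplus_le_le_0_compat; apply pow2_ge_0).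
  apply sqrt_le_1_alt.
  assert (x11^2 <= (a*e+b*g)^2) by (apply pow_incr; lra).
  assert (x12^2 <= (a*f+b*h)^2) by (apply pow_incr; lra).
  assert (x21^2 <= (c*e+d*g)^2) by (apply pow_incr; lra).
  assert (x22^2 <= (c*f+d*h)^2) by (apply pow_incr; lra).
  assert (0 <= (a*g-b*e)^2) by apply pow2_ge_0.
  assert (0 <= (a*h-b*f)^2) by apply pow2_ge_0.
  assert (0 <= (c*g-d*e)^2) by apply pow2_ge_0.
  assert (0 <= (c*h-d*f)^2) by apply pow2_ge_0.
  nra.
Qed.

Definition mzero : M2 := mkM2 0%C 0%C 0%C 0%C.
Definition mnorm (A : M2) : R := mdist A mzero.
Lemma Csub0 x : (x - ma mzero)%C = x /\ (x - mb mzero)%C = x /\ (x - mc mzero)%C = x /\ (x - md mzero)%C = x.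
Proof. simpl. repeat split; ring. Qed.

Lemma mdist_n4 A B : mdist A B = n4 (Cmod (ma A - ma B)%C) (Cmod (mb A - mb B)%C)
   (Cmod (mc A - mc B)%C) (Cmod (md A - md B)%C).
Proof. reflexivity. Qed.

Lemma mnorm_n4 A : mnorm A = n4 (Cmod (ma A)) (Cmod (mb A)) (Cmod (mc A)) (Cmod (md A)).
Proof. unfold mnorm. rewrite mdist_n4. destruct (Csub0 (ma A)) as (->&_&_&_). destruct (Csub0 (mb A)) as (_&->&_&_).
  destruct (Csub0 (mc A)) as (_&_&->&_). destruct (Csub0 (md A)) as (_&_&_&->). reflexivity. Qed.

Lemma M2_eq A B : ma A = ma B -> mb A = mb B -> mc A = mc B -> md A = md B -> A = B.
Proof. destruct A, B; simpl; intros; subst; reflexivity. Qed.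

Lemma Cmod_sub_sym (a b : C) : Cmod (a - b)%C = Cmod (b - a)%C.
Proof. replace (a - b)%C with (- (b - a))%C by ring. apply Cmod_opp. Qed.

Lemma mdist_sym A B : mdist A B = mdist B A.
Proof. rewrite !mdist_n4. rewrite (Cmod_sub_sym (ma A)), (Cmod_sub_sym (mb A)),
  (Cmod_sub_sym (mc A)), (Cmod_sub_sym (md A)). reflexivity. Qed.

Lemma Cmod_sub_neg (a b : C) : Cmod (- a - - b)%C = Cmod (a - b)%C.
Proof. replace (- a - - b)%C with (- (a - b))%C by ring. apply Cmod_opp. Qed.

Lemma mdist_neg A B : mdist (mneg A) (mneg B) = mdist A B.
Proof. rewrite !mdist_n4. simpl. rewrite !Cmod_sub_neg. reflexivity. Qed.

Lemma mneg_neg A : mneg (mneg A) = A.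
Proof. apply M2_eq; simpl; ring. Qed.

Lemma mdist_neg_r A B : mdist A (mneg B) = mdist (mneg A) B.
Proof. rewrite <- (mdist_neg (mneg A)), mneg_neg. reflexivity. Qed.

Lemma Cmod_tri3 (a b c : C) : Cmod (a - c)%C <= Cmod (a - b)%C + Cmod (b - c)%C.
Proof. replace (a - c)%C with ((a - b) + (b - c))%C by ring. apply Cmod_triangle. Qed.

Lemma mdist_tri A B C : mdist A C <= mdist A B + mdist B C.
Proof. rewrite !mdist_n4.
  eapply Rle_trans; [|apply n4_tri]. apply n4_mono; split; try apply Cmod_ge_0; apply Cmod_tri3.
Qed.

Lemma mdist_nonneg A B : 0 <= mdist A B.
Proof. apply sqrt_pos. Qed.

Lemma mdist_self A : mdist A A = 0.
Proof. rewrite mdist_n4. repeat match goal with |- context [(?x - ?x)%C] => replace (x - x)%C with (RtoC 0) by ring end.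
  rewrite Cmod_0. unfold n4. replace (0^2+0^2+0^2+0^2) with 0 by ring. apply sqrt_0. Qed.

Lemma Cmod_le_n4_1 p q r s : Cmod p <= n4 (Cmod p) (Cmod q) (Cmod r) (Cmod s).
Proof. apply n4_ge1, Cmod_ge_0. Qed.

Lemma mdist_entries A B : Cmod (ma A - ma B)%C <= mdist A B /\ Cmod (mb A - mb B)%C <= mdist A B
  /\ Cmod (mc A - mc B)%C <= mdist A B /\ Cmod (md A - md B)%C <= mdist A B.
Proof. rewrite mdist_n4. repeat split.
  - apply Cmod_le_n4_1.
  - rewrite n4_perm2. apply Cmod_le_n4_1.
  - rewrite n4_perm3, n4_perm2. apply Cmod_le_n4_1.
  - rewrite n4_perm. apply Cmod_le_n4_1.
Qed.

Lemma mnorm_entries A : Cmod (ma A) <= mnorm A /\ Cmod (mb A) <= mnorm A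
  /\ Cmod (mc A) <= mnorm A /\ Cmod (md A) <= mnorm A.
Proof. rewrite mnorm_n4. repeat split.
  - apply Cmod_le_n4_1.
  - rewrite n4_perm2. apply Cmod_le_n4_1.
  - rewrite n4_perm3, n4_perm2. apply Cmod_le_n4_1.
  - rewrite n4_perm. apply Cmod_le_n4_1.
Qed.

Lemma Cmod_eq0_sub (a b : C) : Cmod (a - b)%C = 0 -> a = b.
Proof. intros H. apply Cmod_eq_0 in H. replace a with ((a - b) + b)%C by ring. rewrite H. ring. Qed.

Lemma mdist_zero_eq A B : mdist A B = 0 -> A = B.
Proof. intros H. destruct (mdist_entries A B) as (H1&H2&H3&H4).
  pose proof (Cmod_ge_0 (ma A - ma B)%C). pose proof (Cmod_ge_0 (mb A - mb B)%C).
  pose proof (Cmod_ge_0 (mc A - mc B)%C). pose proof (Cmod_ge_0 (md A - md B)%C).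
  apply M2_eq; apply Cmod_eq0_sub; lra. Qed.

Lemma mnorm_neg A : mnorm (mneg A) = mnorm A.
Proof. rewrite !mnorm_n4. simpl. rewrite !Cmod_opp. reflexivity. Qed.

Lemma mnorm_minv A : mnorm (minv A) = mnorm A.
Proof. rewrite !mnorm_n4. simpl. rewrite !Cmod_opp. rewrite n4_perm. unfold n4. f_equal. ring. Qed.

Lemma mnorm_le A B : mnorm A <= mnorm B + mdist A B.
Proof. unfold mnorm. pose proof (mdist_tri A B mzero). lra. Qed.

Definition mminus (A B : M2) : M2 := mkM2 (ma A - ma B)%C (mb A - mb B)%C (mc A - mc B)%C (md A - md B)%C.

Lemma mdist_mminus A B : mdist A B = mnorm (mminus A B).
Proof. rewrite mdist_n4, mnorm_n4. reflexivity. Qed.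

Lemma mnorm_mul A B : mnorm (mmul A B) <= mnorm A * mnorm B.
Proof. rewrite !mnorm_n4. destruct A as [a b c d], B as [e f g h]; simpl.
  apply n4_mul; try apply Cmod_ge_0; (split; [apply Cmod_ge_0|]);
  (eapply Rle_trans; [apply Cmod_triangle|]); rewrite !Cmod_mult; lra.
Qed.

Lemma mdist_mul_l G A B : mdist (mmul G A) (mmul G B) <= mnorm G * mdist A B.
Proof. rewrite !mdist_mminus.
  replace (mminus (mmul G A) (mmul G B)) with (mmul G (mminus A B)).
  apply mnorm_mul. apply M2_eq; simpl; ring. Qed.

Lemma mmul_assoc A B C : mmul A (mmul B C) = mmul (mmul A B) C.
Proof. apply M2_eq; simpl; ring. Qed.
Lemma mmul_mid_l A : mmul mid A = A.
Proof. apply M2_eq; simpl; ring. Qed.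
Lemma mmul_mid_r A : mmul A mid = A.
Proof. apply M2_eq; simpl; ring. Qed.
Lemma mmul_neg_r A B : mmul A (mneg B) = mneg (mmul A B).
Proof. apply M2_eq; simpl; ring. Qed.
Lemma minv_l A : SL2 A -> mmul (minv A) A = mid.
Proof. unfold SL2, mdet. intros H. apply M2_eq; simpl; try ring; rewrite <- H; ring. Qed.
Lemma minv_r A : SL2 A -> mmul A (minv A) = mid.
Proof. unfold SL2, mdet. intros H. apply M2_eq; simpl; try ring; rewrite <- H; ring. Qed.
Lemma mpow_add A a b : mpow A (a + b) = mmul (mpow A a) (mpow A b).
Proof. induction a; simpl. rewrite mmul_mid_l; reflexivity. rewrite IHa. apply mmul_assoc. Qed.
Lemma mpow_S_r A k : mpow A (S k) = mmul (mpow A k) A.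
Proof. replace (S k) with (k + 1)%nat by lia. rewrite mpow_add. simpl. rewrite mmul_mid_r. reflexivity. Qed.
Lemma mpow_mem G A k : is_subgroup G -> G A -> G (mpow A k).
Proof. intros (H1&H2&H3&H4&H5) HA. induction k; simpl; auto. Qed.
Lemma mdet_neg A : mdet (mneg A) = mdet A.
Proof. unfold mdet; simpl; ring. Qed.

Lemma peq_refl A : peq A A.
Proof. left; reflexivity. Qed.
Lemma peq_sym A B : peq A B -> peq B A.
Proof. intros [->| ->]. left; reflexivity. right; rewrite mneg_neg; reflexivity. Qed.
Lemma peq_trans A B C : peq A B -> peq B C -> peq A C.
Proof. intros [->| ->] [->| ->]. left; auto. right; auto. right; auto. left; apply mneg_neg. Qed.

Lemma pdist_nonneg A B : 0 <= pdist A B.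
Proof. unfold pdist, Rmin. destruct Rle_dec; apply mdist_nonneg. Qed.
Lemma pdist_cases A B : pdist A B = mdist A B \/ pdist A B = mdist A (mneg B).
Proof. unfold pdist, Rmin. destruct Rle_dec; auto. Qed.
Lemma pdist_le1 A B : pdist A B <= mdist A B.
Proof. apply Rmin_l. Qed.
Lemma pdist_le2 A B : pdist A B <= mdist A (mneg B).
Proof. apply Rmin_r. Qed.
Lemma pdist_neg_r A B : pdist A (mneg B) = pdist A B.
Proof. unfold pdist. rewrite mneg_neg. apply Rmin_comm. Qed.
Lemma pdist_sym A B : pdist A B = pdist B A.
Proof. unfold pdist. f_equal; [apply mdist_sym| rewrite mdist_neg_r; apply mdist_sym]. Qed.
Lemma pdist_neg_l A B : pdist (mneg A) B = pdist A B.
Proof. rewrite pdist_sym, pdist_neg_r, pdist_sym. reflexivity. Qed.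
Lemma pdist_peq_l A B C : peq A B -> pdist A C = pdist B C.
Proof. intros [->| ->]. reflexivity. apply pdist_neg_l. Qed.
Lemma pdist_peq_r A B C : peq A B -> pdist C A = pdist C B.
Proof. intros [->| ->]. reflexivity. apply pdist_neg_r. Qed.
Lemma pdist_self A : pdist A A = 0.
Proof. pose proof (pdist_le1 A A). rewrite mdist_self in H. pose proof (pdist_nonneg A A). lra. Qed.
Lemma peq_pdist A B : peq A B -> pdist A B = 0.
Proof. intros H. rewrite (pdist_peq_l A B B H). apply pdist_self. Qed.
Lemma pdist_peq A B : pdist A B = 0 -> peq A B.
Proof. intros H. destruct (pdist_cases A B) as [E|E]; rewrite E in H; apply mdist_zero_eq in H;
  [left|right]; auto. Qed.
Lemma pdist_tri A B C : pdist A C <= pdist A B + pdist B C.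
Proof.
  destruct (pdist_cases A B) as [E1|E1]; destruct (pdist_cases B C) as [E2|E2]; rewrite E1, E2.
  - eapply Rle_trans; [apply pdist_le1|apply mdist_tri].
  - eapply Rle_trans; [apply pdist_le2|apply mdist_tri].
  - eapply Rle_trans; [apply pdist_le2|]. eapply Rle_trans; [apply (mdist_tri _ (mneg B))|].
    rewrite mdist_neg. lra.
  - eapply Rle_trans; [apply pdist_le1|]. eapply Rle_trans; [apply (mdist_tri _ (mneg B))|].
    rewrite <- mdist_neg_r. lra.
Qed.
Lemma pdist_mul_l G A B : pdist (mmul G A) (mmul G B) <= mnorm G * pdist A B.
Proof.
  assert (0 <= mnorm G) by apply mdist_nonneg.
  destruct (pdist_cases A B) as [E|E]; rewrite E.
  - eapply Rle_trans; [apply pdist_le1|apply mdist_mul_l].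
  - eapply Rle_trans; [apply pdist_le2|]. rewrite <- mmul_neg_r. apply mdist_mul_l.
Qed.
Lemma mnorm_le_p A B : mnorm A <= mnorm B + pdist A B.
Proof. destruct (pdist_cases A B) as [E|E]; rewrite E. apply mnorm_le.
  rewrite <- (mnorm_neg B). apply mnorm_le. Qed.
Lemma mnorm_mid : mnorm mid <= 3/2.
Proof. rewrite mnorm_n4. simpl. rewrite Cmod_0, Cmod_1. apply sqrt_le_of_sq; lra. Qed.

Lemma Cmod_le_ri (a : C) (x y : R) : Cmod (a - (x,y))%C <= Rabs (fst a - x) + Rabs (snd a - y).
Proof. destruct a as [p q]. unfold Cmod, Cminus, Cplus, Copp; simpl.
  pose proof (Rabs_pos (p - x)). pose proof (Rabs_pos (q - y)).
  rewrite <- (sqrt_pow2 (Rabs (p-x) + Rabs (q-y))) by lra. apply sqrt_le_1_alt.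
  match goal with |- _ <= ?r => replace r with ((Rabs (p-x) + Rabs (q-y))^2) by reflexivity end.
  match goal with |- ?e <= _ => replace e with ((p-x)^2 + (q-y)^2) by ring end.
  rewrite <- (pow2_abs (p-x)), <- (pow2_abs (q - y)). nra. Qed.
Lemma snd_le_Cmod (a : C) : Rabs (snd a) <= Cmod a.
Proof. pose proof (Rmax_Cmod a). eapply Rle_trans; [|exact H]. apply Rmax_r. Qed.
Lemma fst_le_Cmod (a : C) : Rabs (fst a) <= Cmod a.
Proof. pose proof (Rmax_Cmod a). eapply Rle_trans; [|exact H]. apply Rmax_l. Qed.




Lemma choice2 {A B : Type} (P : A -> B -> Prop) : (forall a, exists b, P a b) -> exists f, forall a, P a (f a).
Proof. intros H. exists (fun a => proj1_sig (constructive_indefinite_description _ (H a))).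
  intros a. exact (proj2_sig (constructive_indefinite_description _ (H a))). Qed.

Fixpoint seqrec (f : nat -> nat -> nat) (k : nat) : nat :=
  match k with O => f O O | S k' => f (S (seqrec f k')) (S k') end.

Definition strict_incr (s : nat -> nat) := forall n, (s n < s (S n))%nat.
Lemma strict_incr_ge s : strict_incr s -> forall n, (n <= s n)%nat.
Proof. intros H n. induction n. lia. specialize (H n). lia. Qed.
Lemma strict_incr_comp s t : strict_incr s -> strict_incr t -> strict_incr (fun n => s (t n)).
Proof. intros Hs Ht n. assert (forall a b, (a < b)%nat -> (s a < s b)%nat).
  { intros a b Hab. induction Hab. apply Hs. specialize (Hs m). lia. }
  apply H, Ht. Qed.
Lemma cv_subseq u l s : strict_incr s -> Un_cv u l -> Un_cv (fun n => u (s n)) l.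
Proof. intros Hs H eps He. destruct (H eps He) as [N HN]. exists N. intros n Hn.
  apply HN. pose proof (strict_incr_ge s Hs n). lia. Qed.

Lemma BW_sub (x : nat -> R) (B : R) : (forall n, Rabs (x n) <= B) ->
  exists s l, strict_incr s /\ Un_cv (fun n => x (s n)) l.
Proof.
  intros HB.
  destruct (Bolzano_Weierstrass x (fun c => -B <= c <= B) (compact_P3 (-B) B)) as [l Hl].
  { intros n. specialize (HB n). unfold Rabs in HB; destruct (Rcase_abs (x n)); lra. }
  assert (Hp : forall N k, exists p, (N <= p)%nat /\ Rabs (x p - l) < / (INR k + 1)).
  { intros N k. assert (Hpos : 0 < / (INR k + 1)).
    { apply Rinv_0_lt_compat. pose proof (pos_INR k). lra. }
    destruct (Hl (disc l (mkposreal _ Hpos)) N) as [p [Hp1 Hp2]].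
    { exists (mkposreal _ Hpos). intros y Hy. exact Hy. }
    exists p. split; auto. }
  destruct (choice2 (fun (Nk : nat * nat) p => (fst Nk <= p)%nat /\ Rabs (x p - l) < / (INR (snd Nk) + 1)))
    as [g Hg].
  { intros [N k]. apply Hp. }
  set (f := fun N k => g (N, k)).
  exists (seqrec f), l. split.
  - intros n. pose proof (proj1 (Hg (S (seqrec f n), S n))) as H1. simpl in H1.
    change (seqrec f (S n)) with (g (S (seqrec f n), S n)). lia.
  - assert (Hk : forall k, Rabs (x (seqrec f k) - l) < / (INR k + 1)).
    { intros k. destruct k.
      - apply (proj2 (Hg (0, 0)%nat)).
      - change (seqrec f (S k)) with (g (S (seqrec f k), S k)). apply (proj2 (Hg (S (seqrec f k), S k))). }
    intros eps He. destruct (archimed (/ eps)) as [Ha _].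
    assert (HN : exists N : nat, / eps < INR N).
    { exists (Z.to_nat (up (/ eps))). rewrite INR_IZR_INZ.
      destruct (Z.lt_ge_cases (up (/eps)) 0).
      - 
        assert (0 < / eps) by (apply Rinv_0_lt_compat; lra).
        exfalso. assert (Hq : 0 < IZR (up (/eps))) by lra. apply lt_0_IZR in Hq. lia.
      - rewrite Z2Nat.id by lia. exact Ha. }
    destruct HN as [N HN]. exists N. intros n Hn. unfold R_dist.
    eapply Rlt_trans. apply Hk.
    assert (INR N <= INR n) by (apply le_INR; lia).
    assert (0 < / eps) by (apply Rinv_0_lt_compat; lra).
    rewrite <- (Rinv_inv eps). apply Rinv_lt_contravar. nra. lra.
Qed.


Lemma multi_BW (fs : list (M2 -> R)) : forall (X : nat -> M2) B,
  (forall f n, In f fs -> Rabs (f (X n)) <= B) ->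
  exists s, strict_incr s /\ forall f, In f fs -> exists l, Un_cv (fun n => f (X (s n))) l.
Proof.
  induction fs as [|f fs IH]; intros X B HB.
  - exists (fun n => n). split. intros n; lia. intros f [].
  - destruct (BW_sub (fun n => f (X n)) B) as [s1 [l1 [Hs1 Hl1]]].
    { intros n. apply HB. left; auto. }
    destruct (IH (fun n => X (s1 n)) B) as [s2 [Hs2 H2]].
    { intros g n Hg. apply HB. right; auto. }
    exists (fun n => s1 (s2 n)). split. apply strict_incr_comp; auto.
    intros g [<-|Hg].
    + exists l1. apply (cv_subseq (fun n => f (X (s1 n))) l1 s2 Hs2 Hl1).
    + apply H2; auto.
Qed.

Lemma cluster (X : nat -> M2) B : (forall n, mnorm (X n) <= B) ->
  exists A, forall eps N, eps > 0 -> exists n, (n >= N)%nat /\ mdist (X n) A < eps.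
Proof.
  intros HB.
  set (fs := (fun A => fst (ma A)) :: (fun A => snd (ma A)) :: (fun A => fst (mb A)) :: (fun A => snd (mb A))
          :: (fun A => fst (mc A)) :: (fun A => snd (mc A)) :: (fun A => fst (md A)) :: (fun A => snd (md A)) :: nil).
  destruct (multi_BW fs X B) as [s [Hs Hf]].
  { intros f n Hin. specialize (HB n). destruct (mnorm_entries (X n)) as (E1&E2&E3&E4).
    pose proof (fst_le_Cmod (ma (X n))). pose proof (snd_le_Cmod (ma (X n))).
    pose proof (fst_le_Cmod (mb (X n))). pose proof (snd_le_Cmod (mb (X n))).
    pose proof (fst_le_Cmod (mc (X n))). pose proof (snd_le_Cmod (mc (X n))).
    pose proof (fst_le_Cmod (md (X n))). pose proof (snd_le_Cmod (md (X n))).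
    simpl in Hin. repeat destruct Hin as [<-|Hin]; simpl; try lra. }
  destruct (Hf (fun A => fst (ma A))) as [l1 L1]. simpl; tauto.
  destruct (Hf (fun A => snd (ma A))) as [l2 L2]. simpl; tauto.
  destruct (Hf (fun A => fst (mb A))) as [l3 L3]. simpl; tauto.
  destruct (Hf (fun A => snd (mb A))) as [l4 L4]. simpl; tauto.
  destruct (Hf (fun A => fst (mc A))) as [l5 L5]. simpl; tauto.
  destruct (Hf (fun A => snd (mc A))) as [l6 L6]. simpl; tauto.
  destruct (Hf (fun A => fst (md A))) as [l7 L7]. simpl; tauto.
  destruct (Hf (fun A => snd (md A))) as [l8 L8]. simpl; tauto.
  exists (mkM2 (l1,l2) (l3,l4) (l5,l6) (l7,l8)).
  intros eps N He.
  assert (He8 : eps / 8 > 0) by lra.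
  destruct (L1 _ He8) as [N1 H1]. destruct (L2 _ He8) as [N2 H2].
  destruct (L3 _ He8) as [N3 H3]. destruct (L4 _ He8) as [N4 H4].
  destruct (L5 _ He8) as [N5 H5]. destruct (L6 _ He8) as [N6 H6].
  destruct (L7 _ He8) as [N7 H7]. destruct (L8 _ He8) as [N8 H8].
  set (n := (N + N1 + N2 + N3 + N4 + N5 + N6 + N7 + N8)%nat).
  exists (s n). split. pose proof (strict_incr_ge s Hs n). unfold n in *. lia.
  specialize (H1 n ltac:(unfold n; lia)). specialize (H2 n ltac:(unfold n; lia)).
  specialize (H3 n ltac:(unfold n; lia)). specialize (H4 n ltac:(unfold n; lia)).
  specialize (H5 n ltac:(unfold n; lia)). specialize (H6 n ltac:(unfold n; lia)).
  specialize (H7 n ltac:(unfold n; lia)). specialize (H8 n ltac:(unfold n; lia)).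
  unfold R_dist in *.
  rewrite mdist_n4. simpl.
  eapply Rle_lt_trans. apply n4_le_sum; apply Cmod_ge_0.
  pose proof (Cmod_le_ri (ma (X (s n))) l1 l2). pose proof (Cmod_le_ri (mb (X (s n))) l3 l4).
  pose proof (Cmod_le_ri (mc (X (s n))) l5 l6). pose proof (Cmod_le_ri (md (X (s n))) l7 l8).
  lra.
Qed.

Lemma mdet_lip A B : Cmod (mdet A - mdet B)%C <= 2 * (mnorm A + mnorm B) * mdist A B.
Proof.
  destruct (mnorm_entries A) as (A1&A2&A3&A4). destruct (mnorm_entries B) as (B1&B2&B3&B4).
  destruct (mdist_entries A B) as (D1&D2&D3&D4).
  unfold mdet.
  replace (ma A * md A - mb A * mc A - (ma B * md B - mb B * mc B))%C with
    (ma A * (md A - md B) + (ma A - ma B) * md B - (mb A * (mc A - mc B) + (mb A - mb B) * mc B))%C by ring.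
  unfold Cminus at 1. eapply Rle_trans. apply Cmod_triangle. rewrite Cmod_opp.
  eapply Rle_trans. apply Rplus_le_compat; apply Cmod_triangle. rewrite !Cmod_mult.
  pose proof (Cmod_ge_0 (ma A)). pose proof (Cmod_ge_0 (mb A)). pose proof (Cmod_ge_0 (mc B)).
  pose proof (Cmod_ge_0 (md B)). pose proof (Cmod_ge_0 (ma A - ma B)%C). pose proof (Cmod_ge_0 (mb A - mb B)%C).
  pose proof (Cmod_ge_0 (mc A - mc B)%C). pose proof (Cmod_ge_0 (md A - md B)%C).
  pose proof (mdist_nonneg A B).
  nra.
Qed.

Lemma mdet_lip_p A B : Cmod (mdet A - mdet B)%C <= 2 * (mnorm A + mnorm B) * pdist A B.
Proof. destruct (pdist_cases A B) as [E|E]; rewrite E. apply mdet_lip.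
  rewrite <- (mnorm_neg B), <- (mdet_neg B). apply mdet_lip. Qed.

Lemma D_props (G : Dspace) : is_subgroup (mem G) /\ is_discrete (mem G) /\ is_torsion_free (mem G).
Proof. exact (proj2_sig G). Qed.

Lemma mem_SL2 (G : Dspace) A : mem G A -> SL2 A.
Proof. destruct (D_props G) as [[H _] _]. apply H. Qed.
Lemma mem_mid (G : Dspace) : mem G mid.
Proof. destruct (D_props G) as [(_&H&_) _]. exact H. Qed.
Lemma mem_mul (G : Dspace) A B : mem G A -> mem G B -> mem G (mmul A B).
Proof. destruct (D_props G) as [(_&_&_&H&_) _]. apply H. Qed.
Lemma mem_inv (G : Dspace) A : mem G A -> mem G (minv A).
Proof. destruct (D_props G) as [(_&_&_&_&H) _]. apply H. Qed.
Lemma mem_pow (G : Dspace) A k : mem G A -> mem G (mpow A k).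
Proof. apply mpow_mem. apply D_props. Qed.

Lemma cancel_l P X : SL2 P -> mmul (minv P) (mmul P X) = X.
Proof. intros H. rewrite mmul_assoc, minv_l by exact H. apply mmul_mid_l. Qed.

Lemma pdist_cancel P X Y : SL2 P -> pdist X Y <= mnorm P * pdist (mmul P X) (mmul P Y).
Proof. intros H. rewrite <- (cancel_l P X H) at 1. rewrite <- (cancel_l P Y H) at 1.
  rewrite <- (mnorm_minv P). apply pdist_mul_l. Qed.

Lemma exit_lemma (G : Dspace) g eta : 0 < eta <= 1/2 -> mem G g -> ~ peq g mid ->
  pdist g mid < eta/8 -> exists k, eta/2 <= pdist (mpow g k) mid < eta.
Proof.
  intros Heta Hg Hng Hsmall.
  pose proof mnorm_mid as Hmid.
  assert (Hstep : forall k, pdist (mpow g k) mid < eta/2 -> pdist (mpow g (S k)) mid < eta).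
  { intros k Hk. eapply Rle_lt_trans. apply (pdist_tri _ (mpow g k)).
    rewrite mpow_S_r. rewrite <- (mmul_mid_r (mpow g k)) at 2.
    pose proof (pdist_mul_l (mpow g k) g mid).
    pose proof (mnorm_le_p (mpow g k) mid). pose proof (pdist_nonneg g mid).
    pose proof (mdist_nonneg (mpow g k) mzero).
    assert (mnorm (mpow g k) * pdist g mid <= 2 * (eta/8)).
    { apply Rmult_le_compat; try lra. unfold mnorm; lra. }
    lra. }
  destruct (classic (exists k, eta/2 <= pdist (mpow g k) mid < eta)) as [Hex|Hno]; auto.
  exfalso.
  assert (Hall : forall k, pdist (mpow g k) mid < eta/2).
  { induction k. simpl. rewrite pdist_self. lra.
    specialize (Hstep k IHk). destruct (Rlt_le_dec (pdist (mpow g (S k)) mid) (eta/2)); auto.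
    exfalso. apply Hno. exists (S k). lra. }
  destruct (cluster (fun k => mpow g k) 2) as [A HA].
  { intros n. pose proof (mnorm_le_p (mpow g n) mid). specialize (Hall n). lra. }
  destruct (D_props G) as (_&Hdisc&Htf).
  destruct (Hdisc mid (mem_mid G)) as [d [Hd Hdd]].
  destruct (HA (d/8) 0%nat) as [a [_ Ha]]. lra.
  destruct (HA (d/8) (S a)) as [b [Hb1 Hb]]. lra.
  set (e := (b - a)%nat).
  assert (Eb : mpow g b = mmul (mpow g a) (mpow g e)). { rewrite <- mpow_add. f_equal. unfold e; lia. }
  assert (HSL : SL2 (mpow g a)) by (apply (mem_SL2 G), mem_pow, Hg).
  assert (Hclose : pdist (mpow g e) mid < d).
  { pose proof (pdist_cancel (mpow g a) (mpow g e) mid HSL) as Hc.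
    rewrite <- Eb, mmul_mid_r in Hc.
    pose proof (pdist_le1 (mpow g b) (mpow g a)).
    pose proof (mdist_tri (mpow g b) A (mpow g a)). rewrite (mdist_sym A) in H0.
    pose proof (mnorm_le_p (mpow g a) mid). specialize (Hall a).
    pose proof (pdist_nonneg (mpow g b) (mpow g a)).
    assert (mnorm (mpow g a) * pdist (mpow g b) (mpow g a) <= 2 * (d/4)).
    { apply Rmult_le_compat; try lra. apply mdist_nonneg. }
    lra. }
  rewrite pdist_sym in Hclose.
  specialize (Hdd _ (mem_pow G g e Hg) Hclose).
  apply Hng. apply (Htf g e Hg). unfold e; lia. apply peq_sym, Hdd.
Qed.

Lemma inv_small eps : eps > 0 -> exists N : nat, forall n, (n >= N)%nat -> / (INR n + 1) < eps.
Proof.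
  intros He. destruct (archimed (/ eps)) as [Ha _].
  assert (HN : exists N : nat, / eps < INR N).
  { exists (Z.to_nat (up (/ eps))). rewrite INR_IZR_INZ.
    destruct (Z.lt_ge_cases (up (/eps)) 0).
    - assert (0 < / eps) by (apply Rinv_0_lt_compat; lra).
      exfalso. assert (Hq : 0 < IZR (up (/eps))) by lra. apply lt_0_IZR in Hq. lia.
    - rewrite Z2Nat.id by lia. exact Ha. }
  destruct HN as [N HN]. exists N. intros n Hn.
  assert (INR N <= INR n) by (apply le_INR; lia).
  assert (0 < / eps) by (apply Rinv_0_lt_compat; lra).
  rewrite <- (Rinv_inv eps). apply Rinv_lt_contravar. nra. lra.
Qed.

Lemma cv_of_inv (u : nat -> R) t : (forall n, Rabs (u n - t) < / (INR n + 1)) -> Un_cv u t.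
Proof. intros H eps He. destruct (inv_small eps He) as [N HN]. exists N. intros n Hn.
  unfold R_dist. eapply Rlt_trans; [apply H|apply HN; auto]. Qed.

Lemma zero_of_small x : 0 <= x -> (forall e, e > 0 -> x < e) -> x = 0.
Proof. intros H1 H2. destruct (Rle_lt_or_eq_dec 0 x H1) as [H|H]; auto.
  specialize (H2 x H). lra. Qed.

Lemma cluster_SL2 (X : nat -> M2) B A : (forall n, SL2 (X n)) -> (forall n, mnorm (X n) <= B) ->
  (forall eps N, eps > 0 -> exists n, (n >= N)%nat /\ mdist (X n) A < eps) -> SL2 A.
Proof.
  intros HS HB HA. unfold SL2. symmetry. apply Cmod_eq0_sub.
  apply zero_of_small. apply Cmod_ge_0. intros e He.
  assert (HK : 0 < 2 * (Rabs B + mnorm A) + 1).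
  { pose proof (Rabs_pos B). pose proof (mdist_nonneg A mzero). unfold mnorm. lra. }
  destruct (HA (e / (2 * (Rabs B + mnorm A) + 1)) 0%nat) as [n [_ Hn]].
  { apply Rdiv_lt_0_compat; lra. }
  pose proof (mdet_lip (X n) A) as Hl. rewrite (HS n) in Hl.
  assert (mnorm (X n) <= Rabs B) by (eapply Rle_trans; [apply HB| apply Rle_abs]).
  pose proof (mdist_nonneg (X n) A). pose proof (mdist_nonneg (X n) mzero). pose proof (mdist_nonneg A mzero).
  assert (Hm : 2 * (mnorm (X n) + mnorm A) * mdist (X n) A <= 2 * (Rabs B + mnorm A) * mdist (X n) A).
  { apply Rmult_le_compat_r. lra. unfold mnorm in *. lra. }
  assert (mdist (X n) A * (2 * (Rabs B + mnorm A) + 1) < e).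
  { apply (Rmult_lt_compat_r (2 * (Rabs B + mnorm A) + 1)) in Hn; auto.
    unfold Rdiv in Hn. rewrite Rmult_assoc, Rinv_l in Hn by lra. lra. }
  nra.
Qed.

Lemma no_small (Gam : R -> Dspace) t : chabauty_path Gam -> in01 t ->
  exists delta eps, delta > 0 /\ eps > 0 /\ forall u, in01 u -> Rabs (u - t) < delta ->
    forall g, mem (Gam u) g -> pdist g mid < eps -> peq g mid.
Proof.
  intros HG Ht.
  destruct (D_props (Gam t)) as (_&Hdisc&_).
  destruct (Hdisc mid (mem_mid _)) as [e0 [He0 Hd0]].
  set (eta := Rmin (e0/2) (1/2)).
  assert (Heta : 0 < eta <= 1/2 /\ eta <= e0/2).
  { unfold eta. split. split. apply Rmin_pos; lra. apply Rmin_r. apply Rmin_l. }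
  apply NNPP. intros Hn.
  assert (Hseq : forall n : nat, exists p : R * M2, in01 (fst p) /\ Rabs (fst p - t) < / (INR n + 1)
     /\ mem (Gam (fst p)) (snd p) /\ eta/2 <= pdist (snd p) mid < eta).
  { intros n. apply NNPP. intros Hno. apply Hn. exists (/ (INR n + 1)), (eta/8).
    split. apply Rinv_0_lt_compat. pose proof (pos_INR n). lra. split. lra.
    intros u Hu Hut g Hg Hgs. apply NNPP. intros Hng.
    destruct (exit_lemma (Gam u) g eta (proj1 Heta) Hg Hng Hgs) as [k Hk].
    apply Hno. exists (u, mpow g k). simpl. split; [auto|split;[auto|split;[apply mem_pow; auto|auto]]]. }
  destruct (choice2 _ Hseq) as [f Hf].
  set (u := fun n => fst (f n)). set (h := fun n => snd (f n)).
  assert (Hu : forall n, in01 (u n)) by (intros n; apply (Hf n)).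
  assert (Hcv : Un_cv u t) by (apply cv_of_inv; intros n; apply (Hf n)).
  destruct (HG t u Ht Hu Hcv) as [HC1 _].
  assert (Hbd : forall n, mnorm (h n) <= 2).
  { intros n. pose proof (mnorm_le_p (h n) mid). pose proof mnorm_mid. destruct (Hf n) as (_&_&_&Hq). 
    unfold h in *. lra. }
  destruct (cluster h 2 Hbd) as [A HA].
  assert (HSL : SL2 A).
  { apply (cluster_SL2 h 2); auto. intros n. apply (mem_SL2 (Gam (u n))). apply (Hf n). }
  assert (HAm : mem (Gam t) A).
  { apply (HC1 h). intros n; apply (Hf n). split; auto.
    intros eps N He. destruct (HA eps N He) as [n [Hn1 Hn2]]. exists n. split; auto.
    eapply Rle_lt_trans. apply pdist_le1. auto. }
  destruct (HA (eta/4) 0%nat) as [n [_ Hn2]]. lra.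
  pose proof (pdist_le1 (h n) A).
  destruct (Hf n) as (_&_&_&Hh). fold (h n) in Hh.
  pose proof (pdist_tri mid (h n) A). pose proof (pdist_tri (h n) A mid).
  rewrite (pdist_sym mid (h n)) in H0. rewrite (pdist_sym A mid) in H1.
  assert (Hlt : pdist mid A < e0) by lra.
  specialize (Hd0 A HAm Hlt). apply peq_pdist in Hd0. lra.
Qed.

Lemma uniq_near (G : Dspace) eps : (forall g, mem G g -> pdist g mid < eps -> peq g mid) ->
  forall p p', mem G p -> mem G p' -> mnorm p * pdist p p' < eps -> peq p p'.
Proof.
  intros H p p' Hp Hp' Hlt.
  set (X := mmul (minv p) p').
  assert (HX : mem G X) by (apply mem_mul; auto; apply mem_inv; auto).
  assert (HSL : SL2 p) by (apply (mem_SL2 G); auto).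
  assert (E : mmul p X = p') by (unfold X; rewrite mmul_assoc, minv_r by auto; apply mmul_mid_l).
  pose proof (pdist_cancel p X mid HSL) as Hc. rewrite E, mmul_mid_r in Hc.
  rewrite (pdist_sym p' p) in Hc.
  specialize (H X HX ltac:(lra)). rewrite <- E. clearbody X. destruct H as [HX1 | HX1]; rewrite HX1.
  - rewrite mmul_mid_r. apply peq_refl.
  - rewrite mmul_neg_r, mmul_mid_r. right. rewrite mneg_neg. reflexivity.
Qed.

Definition local_clopen (I Z : R -> Prop) := forall x, I x -> exists d, d > 0 /\
  forall u, I u -> Rabs (u - x) < d -> (Z x -> Z u) /\ (~ Z x -> ~ Z u).

Lemma conn_r (I Z : R -> Prop) s t : is_interval I -> I s -> I t -> s <= t -> Z s ->
  local_clopen I Z -> Z t.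
Proof.
  intros HI Hs Ht Hst HZs Hloc. apply NNPP. intros HnZt.
  set (E := fun x => s <= x <= t /\ forall y, s <= y <= x -> Z y).
  assert (HEs : E s).
  { split. lra. intros y Hy. replace y with s by lra. auto. }
  destruct (completeness E) as [m [Hub Hlub]].
  { exists t. intros x [Hx _]. lra. }
  { exists s. auto. }
  assert (Hsm : s <= m) by (apply Hub; auto).
  assert (Hmt : m <= t) by (apply Hlub; intros x [Hx _]; lra).
  assert (HIm : I m) by (apply (HI s m t); auto).
  destruct (Hloc m HIm) as [d [Hd Hdm]].
  destruct (classic (exists x, E x /\ m - d < x)) as [[x [Ex Hx]]|Hno].
  2:{ assert (m <= m - d). { apply Hlub. intros x Ex. apply Rnot_lt_le. intros Hl. apply Hno. eauto. }
      lra. }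
  assert (Hxm : x <= m) by (apply Hub; auto).
  destruct Ex as [Hx1 Hx2].
  assert (HIx : I x) by (apply (HI s x t); auto; lra).
  assert (HZx : Z x) by (apply Hx2; lra).
  assert (Hxd : Rabs (x - m) < d) by (unfold Rabs; destruct Rcase_abs; lra).
  destruct (classic (Z m)) as [HZm|HnZm].
  2:{ exact (proj2 (Hdm x HIx Hxd) HnZm HZx). }
  set (x' := Rmin (m + d/2) t).
  assert (Hx'1 : x' <= t) by apply Rmin_r.
  assert (Hx'2 : x' <= m + d/2) by apply Rmin_l.
  assert (HEx' : E x').
  { split. split; [|auto]. unfold x', Rmin. destruct Rle_dec; lra.
    intros y Hy. destruct (Rle_dec y x) as [Hyx|Hyx]. apply Hx2; lra.
    assert (HIy : I y) by (apply (HI s y t); auto; lra).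
    assert (Hyd : Rabs (y - m) < d) by (unfold Rabs; destruct Rcase_abs; lra).
    exact (proj1 (Hdm y HIy Hyd) HZm). }
  assert (x' <= m) by (apply Hub; auto).
  unfold x', Rmin in *. destruct Rle_dec.
  - lra.
  - apply HnZt. replace t with m by lra. auto.
Qed.

Lemma conn (I Z : R -> Prop) s t : is_interval I -> I s -> I t -> Z s -> local_clopen I Z -> Z t.
Proof.
  intros HI Hs Ht HZs Hloc. destruct (Rle_lt_dec s t) as [Hle|Hlt].
  - apply (conn_r I Z s t); auto.
  - set (I' := fun x => I (- x)). set (Z' := fun x => Z (- x)).
    assert (Z' (- t)).
    { apply (conn_r I' Z' (- s) (- t)).
      - intros x y z Hx Hz Hy. unfold I' in *. apply (HI (- z) (- y) (- x)); auto; lra.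
      - unfold I'. rewrite Ropp_involutive. auto.
      - unfold I'. rewrite Ropp_involutive. auto.
      - lra.
      - unfold Z'. rewrite Ropp_involutive. auto.
      - intros x Hx. destruct (Hloc (- x) Hx) as [d [Hd Hdd]]. exists d. split; auto.
        intros u Hu Hux. apply Hdd. auto. replace (- u - - x) with (- (u - x)) by ring.
        rewrite Rabs_Ropp. auto. }
    unfold Z' in H. rewrite Ropp_involutive in H. auto.
Qed.

Lemma Rabs_lt_iff a b : Rabs a < b <-> - b < a < b.
Proof. unfold Rabs; destruct Rcase_abs; split; intros; lra. Qed.

Lemma Rabs_tri3 u x s : Rabs (u - s) <= Rabs (u - x) + Rabs (x - s).
Proof. replace (u - s) with ((u - x) + (x - s)) by ring. apply Rabs_triang. Qed.

Theorem mainTheorem10 :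
  forall Gam : R -> Dspace, chabauty_path Gam ->
  forall (s : R) (psi : M2), in01 s -> mem (Gam s) psi ->
    (exists (I : R -> Prop) (j : R -> M2),
        open_in01 I /\ Gamma_path Gam s psi I j) /\
    (forall (I : R -> Prop) (j : R -> M2), Gamma_path Gam s psi I j ->
       forall j' : R -> M2, Gamma_path Gam s psi I j' ->
       forall t, I t -> peq (j t) (j' t)).
Proof.
  intros Gam HG s psi Hs Hpsi. split.
  -
    destruct (no_small Gam s HG Hs) as [d0 [e0 [Hd0 [He0 HK]]]].
    set (M := mnorm psi + 1).
    assert (HM : 1 <= M) by (unfold M; pose proof (mdist_nonneg psi mzero); unfold mnorm in *; lra).
    set (r := Rmin (1/4) (e0 / (8 * M))).
    assert (Hr : 0 < r /\ r <= 1/4 /\ r <= e0 / (8 * M)).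
    { unfold r. split. apply Rmin_pos. lra. apply Rdiv_lt_0_compat; lra. split. apply Rmin_l. apply Rmin_r. }
    assert (Huniq : forall u, in01 u -> Rabs (u - s) < d0 -> forall p p', mem (Gam u) p -> mem (Gam u) p' ->
              pdist p psi < 2 * r -> pdist p' psi < 2 * r -> peq p p').
    { intros u Hu Hus p p' Hp Hp' H1 H2. apply (uniq_near (Gam u) e0 (HK u Hu Hus)); auto.
      pose proof (mnorm_le_p p psi). pose proof (pdist_tri p psi p'). rewrite (pdist_sym psi p') in H0.
      pose proof (pdist_nonneg p p').
      assert (mnorm p * pdist p p' <= M * (4 * r)).
      { apply Rmult_le_compat; try lra. apply mdist_nonneg. unfold M; lra. }
      assert (M * (4 * r) <= e0 / 2).
      { destruct Hr as (_&_&Hr3). apply (Rmult_le_compat_l (4 * M)) in Hr3; [|lra].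
        replace (4 * M * (e0 / (8 * M))) with (e0 / 2) in Hr3 by (field; lra). lra. }
      lra. }
    assert (Hex : exists d1, d1 > 0 /\ d1 <= d0 /\ forall u, in01 u -> Rabs (u - s) < d1 ->
               exists p, mem (Gam u) p /\ pdist p psi < r).
    { apply NNPP. intros Hnot.
      assert (Hseq : forall n : nat, exists u, in01 u /\ Rabs (u - s) < / (INR n + 1) /\
                 forall p, mem (Gam u) p -> r <= pdist p psi).
      { intros n. apply NNPP. intros Hno. apply Hnot.
        assert (Hn : 0 < / (INR n + 1)) by (apply Rinv_0_lt_compat; pose proof (pos_INR n); lra).
        exists (Rmin d0 (/ (INR n + 1))). split. apply Rmin_pos; lra. split. apply Rmin_l.
        intros u Hu Hus. apply NNPP. intros Hnp. apply Hno. exists u. split; auto. split.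
        eapply Rlt_le_trans; [exact Hus| apply Rmin_r].
        intros p Hp. apply Rnot_lt_le. intros Hlt. apply Hnp. exists p. auto. }
      destruct (choice2 _ Hseq) as [u Hu].
      assert (Hcv : Un_cv u s) by (apply cv_of_inv; intros n; apply (Hu n)).
      destruct (HG s u Hs (fun n => proj1 (Hu n)) Hcv) as [_ HC2].
      destruct (HC2 psi Hpsi) as [ps [Hps1 Hps2]].
      destruct (Hps2 r (proj1 Hr)) as [N HN].
      specialize (HN N (le_n N)). destruct (Hu N) as (_&_&H3). specialize (H3 _ (Hps1 N)). lra. }
    destruct Hex as [d1 [Hd1 [Hd1d0 Hex]]].
    set (jf := fun u => epsilon (inhabits mid) (fun p => mem (Gam u) p /\ pdist p psi < r)).
    assert (Hj : forall u, in01 u -> Rabs (u - s) < d1 -> mem (Gam u) (jf u) /\ pdist (jf u) psi < r).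
    { intros u Hu Hus. unfold jf. apply epsilon_spec. apply Hex; auto. }
    exists (fun u => in01 u /\ Rabs (u - s) < d1), jf. split.
    + intros x [Hx1 Hx2]. exists (d1 - Rabs (x - s)). split. lra.
      intros u Hu Hux. split; auto. pose proof (Rabs_tri3 u x s). lra.
    + split; [|split; [|split; [|split; [|split]]]].
      * intros x y z [Hx1 Hx2] [Hz1 Hz2] Hy. unfold in01 in *. split. lra.
        apply Rabs_lt_iff in Hx2. apply Rabs_lt_iff in Hz2. apply Rabs_lt_iff. lra.
      * intros x [Hx _]. exact Hx.
      * split; auto. replace (s - s) with 0 by ring. rewrite Rabs_R0. lra.
      * intros t [Ht1 Ht2] eps Heps. apply NNPP. intros Hn.
        assert (Hseq : forall n : nat, exists u, (in01 u /\ Rabs (u - s) < d1) /\ Rabs (u - t) < / (INR n + 1)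
                   /\ eps <= pdist (jf u) (jf t)).
        { intros n. apply NNPP. intros Hno. apply Hn.
          exists (/ (INR n + 1)). split. apply Rinv_0_lt_compat; pose proof (pos_INR n); lra.
          intros u Hu Hut. apply Rnot_le_lt. intros Hle. apply Hno. exists u. auto. }
        destruct (choice2 _ Hseq) as [u Hu].
        assert (Hcv : Un_cv u t) by (apply cv_of_inv; intros n; apply (Hu n)).
        destruct (HG t u Ht1 (fun n => proj1 (proj1 (Hu n))) Hcv) as [_ HC2].
        destruct (Hj t Ht1 Ht2) as [Hjt1 Hjt2].
        destruct (HC2 (jf t) Hjt1) as [ps [Hps1 Hps2]].
        assert (He' : Rmin eps r > 0) by (apply Rmin_pos; lra).
        destruct (Hps2 _ He') as [N HN]. specialize (HN N (le_n N)).
        pose proof (Rmin_l eps r). pose proof (Rmin_r eps r).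
        destruct (Hu N) as ([HuN1 HuN2]&_&HuN3).
        destruct (Hj (u N) HuN1 HuN2) as [Hj1 Hj2].
        assert (Hpq : peq (jf (u N)) (ps N)).
        { apply (Huniq (u N) HuN1 ltac:(lra)); auto. lra.
          pose proof (pdist_tri (ps N) (jf t) psi). lra. }
        rewrite (pdist_peq_l _ _ _ Hpq) in HuN3. lra.
      * intros t [Ht1 Ht2]. apply (Hj t Ht1 Ht2).
      * assert (Hs2 : Rabs (s - s) < d1) by (replace (s - s) with 0 by ring; rewrite Rabs_R0; lra).
        destruct (Hj s Hs Hs2) as [Hj1 Hj2].
        apply (Huniq s Hs ltac:(replace (s - s) with 0 by ring; rewrite Rabs_R0; lra)); auto.
        lra. rewrite pdist_self. lra.
  -
    intros I j (HI&Hsub&Hs'&Hc&Hm&Hpj) j' (_&_&_&Hc'&Hm'&Hpj') t Ht.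
    apply (conn I (fun x => peq (j x) (j' x)) s t); auto.
    + apply (peq_trans _ psi); auto. apply peq_sym; auto.
    + intros x Hx. destruct (classic (peq (j x) (j' x))) as [HZ|HnZ].
      * destruct (no_small Gam x HG (Hsub x Hx)) as [dK [eK [HdK [HeK HK]]]].
        set (M := mnorm (j x) + 1).
        assert (HM : 1 <= M) by (unfold M; pose proof (mdist_nonneg (j x) mzero); unfold mnorm in *; lra).
        set (e := Rmin 1 (eK / (4 * M))).
        assert (He : 0 < e /\ e <= 1 /\ e <= eK / (4 * M)).
        { unfold e. split. apply Rmin_pos. lra. apply Rdiv_lt_0_compat; lra. split. apply Rmin_l. apply Rmin_r. }
        destruct (Hc x Hx e (proj1 He)) as [d1 [Hd1 Hd1']].
        destruct (Hc' x Hx e (proj1 He)) as [d2 [Hd2 Hd2']].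
        exists (Rmin dK (Rmin d1 d2)). split. repeat apply Rmin_pos; lra.
        intros u Hu Hux. pose proof (Rmin_l dK (Rmin d1 d2)). pose proof (Rmin_r dK (Rmin d1 d2)).
        pose proof (Rmin_l d1 d2). pose proof (Rmin_r d1 d2).
        split; [|intros Hn; contradiction].
        intros _. apply (uniq_near (Gam u) eK (HK u (Hsub u Hu) ltac:(lra))); auto.
        specialize (Hd1' u Hu ltac:(lra)). specialize (Hd2' u Hu ltac:(lra)).
        pose proof (mnorm_le_p (j u) (j x)).
        pose proof (pdist_tri (j u) (j x) (j' u)).
        rewrite (pdist_peq_l _ _ (j' u) HZ), (pdist_sym (j' x)) in H4.
        pose proof (pdist_nonneg (j u) (j' u)).
        assert (mnorm (j u) * pdist (j u) (j' u) <= M * (2 * e)).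
        { apply Rmult_le_compat; try lra. apply mdist_nonneg. unfold M; lra. }
        assert (M * (2 * e) <= eK / 2).
        { destruct He as (_&_&He3). apply (Rmult_le_compat_l (2 * M)) in He3; [|lra].
          replace (2 * M * (eK / (4 * M))) with (eK / 2) in He3 by (field; lra). lra. }
        lra.
      * assert (Hdd : 0 < pdist (j x) (j' x)).
        { destruct (Rle_lt_or_eq_dec 0 _ (pdist_nonneg (j x) (j' x))) as [H|H]; auto.
          exfalso. apply HnZ. apply pdist_peq. auto. }
        set (e := pdist (j x) (j' x) / 3).
        destruct (Hc x Hx e ltac:(unfold e; lra)) as [d1 [Hd1 Hd1']].
        destruct (Hc' x Hx e ltac:(unfold e; lra)) as [d2 [Hd2 Hd2']].
        exists (Rmin d1 d2). split. apply Rmin_pos; lra.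
        intros u Hu Hux. pose proof (Rmin_l d1 d2). pose proof (Rmin_r d1 d2).
        split; [intros; contradiction|]. intros _ HZu.
        specialize (Hd1' u Hu ltac:(lra)). specialize (Hd2' u Hu ltac:(lra)).
        apply peq_pdist in HZu.
        pose proof (pdist_tri (j x) (j u) (j' x)) as T1. pose proof (pdist_tri (j u) (j' u) (j' x)) as T2.
        rewrite (pdist_sym (j x) (j u)) in T1. unfold e in *. lra.
Qed.
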